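(* For every positive integer $q$ there exists an integer $N_1(q)$ such that for every $n \ge N_1(q)$, every $n$-optimal $q$-configuration is non-attacking.
   Context: For $n \in \mathbb{N}$ let $I_n = \{\lfloor (2-n)/2 \rfloor, \lfloor (2-n)/2\rfloor + 1, \ldots, \lfloor n/2 \rfloor\}$ (a set of $n$ consecutive integers) and let the board be $\mathcal{B}_n = I_n \times I_n$. A configuration (of Queens) is a finite set $\mathcal{C} \subset \mathbb{Z}\times\mathbb{Z}$; it is a $q$-configuration if $|\mathcal{C}| = q$. For a square $Q=(x,y)$, its attacked set is $A(Q) = \{(x+i,y),(x,y+i),(x+i,y+i),(x+i,y-i) : i \in \mathbb{Z}\setminus\{0\}\}$, and $A(\mathcal{C}) = \bigcup_{Q\in\mathcal{C}} A(Q)$. The cover of $\mathcal{C}$ on $\mathcal{B}_n$ is $\mathrm{cover}_n(\mathcal{C}) = |(\mathcal{C}\cup A(\mathcal{C}))\cap \mathcal{B}_n|$. A $q$-configuration $\mathcal{C}\subset\mathcal{B}_n$ is $n$-optimal if $\mathrm{cover}_n(\mathcal{C}') \le \mathrm{cover}_n(\mathcal{C})$ for every $q$-configuration $\mathcal{C}'\subset \mathcal{B}_n$. A configuration $\mathcal{C}$ is non-attacking if $Q' \notin A(Q)$ for all distinct $Q, Q' \in \mathcal{C}$. *)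

(* Defs.v *)
From Stdlib Require Import ZArith List Bool Lia.
Import ListNotations.
Open Scope Z_scope.

Definition square := (Z * Z)%type.

(* I_n = { floor((2-n)/2), ..., floor(n/2) } : n consecutive integers *)
Definition lowI (n : nat) : Z := (2 - Z.of_nat n) / 2.   (* Z.div floors *)
Definition highI (n : nat) : Z := Z.of_nat n / 2.
Definition inI (n : nat) (z : Z) : bool := (lowI n <=? z) && (z <=? highI n).
Definition inBoard (n : nat) (P : square) : bool := inI n (fst P) && inI n (snd P).

Definition Ilist (n : nat) : list Z := map (fun k => lowI n + Z.of_nat k) (seq 0 n).
Definition board (n : nat) : list square := list_prod (Ilist n) (Ilist n).

Definition attacks (Q P : square) : bool :=
  let '(x, y) := Q in let '(a, b) := P in
  negb ((x =? a) && (y =? b)) &&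
  ((y =? b) || (x =? a) || (a - x =? b - y) || (a - x =? y - b)).

Definition square_eqb (P Q : square) : bool := (fst P =? fst Q) && (snd P =? snd Q).

Definition covered (C : list square) (P : square) : bool :=
  existsb (square_eqb P) C || existsb (fun Q => attacks Q P) C.

Definition cover (n : nat) (C : list square) : nat :=
  length (filter (covered C) (board n)).

Definition qconfig_on (n q : nat) (C : list square) : Prop :=
  NoDup C /\ length C = q /\ (forall P, In P C -> inBoard n P = true).

Definition n_optimal (n q : nat) (C : list square) : Prop :=
  qconfig_on n q C /\
  forall C', qconfig_on n q C' -> (cover n C' <= cover n C)%nat.

Definition non_attacking (C : list square) : Prop :=
  forall Q Q', In Q C -> In Q' C -> Q <> Q' -> attacks Q Q' = false.

(* Main.v *)
Require Import Defs.
From Stdlib Require Import ZArith List Lia Bool.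
Import ListNotations.

Lemma hl n : (1 <= n)%nat -> highI n = lowI n + Z.of_nat n - 1 /\ lowI n <= 1 - highI n /\ - highI n <= lowI n /\ 2 * highI n <= Z.of_nat n /\ Z.of_nat n <= 2 * highI n + 1.
Proof. intros. unfold highI, lowI.
pose proof (Z.div_mod (2 - Z.of_nat n) 2 ltac:(lia)). pose proof (Z.mod_pos_bound (2 - Z.of_nat n) 2 ltac:(lia)).
pose proof (Z.div_mod (Z.of_nat n) 2 ltac:(lia)). pose proof (Z.mod_pos_bound (Z.of_nat n) 2 ltac:(lia)).
lia. Qed.

Definition memZ (b : Z) (S : list Z) : bool := if in_dec Z.eq_dec b S then true else false.
Lemma memZ_iff b S : memZ b S = true <-> In b S.
Proof. unfold memZ; destruct (in_dec Z.eq_dec b S); split; congruence || tauto. Qed.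

Definition cnt (l S : list Z) : nat := length (filter (fun b => memZ b S) l).
Definition Sa (C : list square) (a : Z) : list Z :=
  map snd C ++ map (fun Q => snd Q + (a - fst Q)) C ++ map (fun Q => snd Q - (a - fst Q)) C.
Definition rowcount (C : list square) (a : Z) (l : list Z) : nat :=
  length (filter (fun b => covered C (a,b)) l).
Fixpoint sumf (g : Z -> nat) (l : list Z) : nat :=
  match l with [] => 0%nat | x :: t => (g x + sumf g t)%nat end.

Lemma cover_rows : forall (p : square -> bool) l1 l2,
  length (filter p (list_prod l1 l2)) = sumf (fun a => length (filter (fun b => p (a,b)) l2)) l1.
Proof. induction l1; intros; simpl; auto. rewrite filter_app, length_app, IHl1. f_equal.
  clear. induction l2; simpl; auto. destruct (p (a,a0)); simpl; auto. Qed.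

Lemma sumf_le : forall g h l, (forall a, In a l -> (g a <= h a)%nat) -> (sumf g l <= sumf h l)%nat.
Proof. induction l; simpl; intros. lia. pose proof (H a (or_introl eq_refl)).
  assert (sumf g l <= sumf h l)%nat by (apply IHl; auto). lia. Qed.

Lemma sumf_ite : forall (P R : Z -> bool) c d l,
  sumf (fun a => ((if P a then c else 0) + (if R a then d else 0))%nat) l
  = (c * length (filter P l) + d * length (filter R l))%nat.
Proof. induction l as [|a l IHl]; simpl. lia. rewrite IHl. destruct (P a), (R a); simpl; lia. Qed.

Lemma filter_true_len : forall (l : list Z), length (filter (fun _ => true) l) = length l.
Proof. induction l; simpl; auto. Qed.

Lemma filter_len_le : forall (A:Type) (p : A -> bool) l, (length (filter p l) <= length l)%nat.
Proof. induction l; simpl; auto. destruct (p a); simpl; lia. Qed.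

Lemma filter_split_len : forall (A:Type) (p : A -> bool) l,
  (length (filter p l) + length (filter (fun x => negb (p x)) l) = length l)%nat.
Proof. induction l; simpl; auto. destruct (p a); simpl; lia. Qed.

Lemma cnt_le : forall l S, NoDup l -> (cnt l S <= length S)%nat.
Proof. intros. unfold cnt. apply NoDup_incl_length. now apply NoDup_filter.
  intros x Hx. apply filter_In in Hx. now apply memZ_iff. Qed.

Lemma nodup_le : forall (S : list Z), (length (nodup Z.eq_dec S) <= length S)%nat.
Proof. induction S; simpl; auto. destruct (in_dec Z.eq_dec a S); simpl; lia. Qed.

Lemma nodup_lt : forall (S : list Z), ~ NoDup S -> (length (nodup Z.eq_dec S) < length S)%nat.
Proof. induction S; simpl; intros. exfalso; apply H; constructor.
  destruct (in_dec Z.eq_dec a S). pose proof (nodup_le S); lia.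
  simpl. assert (~NoDup S) by (intro; apply H; constructor; auto). specialize (IHS H0); lia. Qed.

Lemma cnt_le_dup : forall l S, NoDup l -> ~ NoDup S -> (Datatypes.S (cnt l S) <= length S)%nat.
Proof. intros. assert (cnt l S <= length (nodup Z.eq_dec S))%nat.
  { unfold cnt. apply NoDup_incl_length. now apply NoDup_filter.
    intros x Hx. apply filter_In in Hx. apply nodup_In. now apply memZ_iff. }
  pose proof (nodup_lt S H0). lia. Qed.

Lemma cnt_ge : forall l S, NoDup S -> incl S l -> (length S <= cnt l S)%nat.
Proof. intros. unfold cnt. apply NoDup_incl_length; auto.
  intros x Hx. apply filter_In. split; auto. now apply memZ_iff. Qed.

Lemma map_inj_dup : forall (A B : Type) (f : A -> B) C Q Q', NoDup (map f C) -> In Q C -> In Q' C -> f Q = f Q' -> Q = Q'.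
Proof. induction C; simpl; intros. contradiction. inversion H; subst.
  destruct H0, H1; subst; auto.
  - exfalso; apply H5. rewrite H2. now apply in_map.
  - exfalso; apply H5. rewrite <- H2. now apply in_map. Qed.

Lemma NoDup_map_inj : forall (A B : Type) (f : A -> B) l,
  (forall x y, In x l -> In y l -> f x = f y -> x = y) -> NoDup l -> NoDup (map f l).
Proof. induction l; simpl; intros. constructor. inversion H0; subst. constructor.
  intro Hin. apply in_map_iff in Hin. destruct Hin as [y [Hy1 Hy2]].
  assert (y = a) by (apply H; auto). subst. contradiction.
  apply IHl; auto. Qed.

Definition intv (u : Z) (w : nat) : list Z := map (fun k => u + Z.of_nat k) (seq 0 w).
Lemma in_intv : forall u w a, In a (intv u w) <-> u <= a < u + Z.of_nat w.
Proof. intros; unfold intv; rewrite in_map_iff; split.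
  - intros [k [Hk Hk2]]. apply in_seq in Hk2. lia.
  - intros. exists (Z.to_nat (a - u)). rewrite in_seq. lia. Qed.
Lemma NoDup_intv : forall u w, NoDup (intv u w).
Proof. intros. apply NoDup_map_inj. intros; lia. apply seq_NoDup. Qed.
Lemma length_intv : forall u w, length (intv u w) = w.
Proof. intros; unfold intv; now rewrite length_map, length_seq. Qed.
Lemma Ilist_intv : forall n, Ilist n = intv (lowI n) n.
Proof. reflexivity. Qed.

Lemma attacks_iff : forall x y a b, attacks (x,y) (a,b) = true <->
  ~ (x = a /\ y = b) /\ (y = b \/ x = a \/ a - x = b - y \/ a - x = y - b).
Proof. intros. unfold attacks.
  destruct (Z.eqb_spec x a), (Z.eqb_spec y b), (Z.eqb_spec (a-x) (b-y)), (Z.eqb_spec (a-x) (y-b));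
  simpl; split; intuition congruence. Qed.

Lemma covered_notX : forall C a b, ~ In a (map fst C) ->
  (covered C (a,b) = true <-> In b (Sa C a)).
Proof. intros C a b HX. unfold covered, Sa. rewrite orb_true_iff, !existsb_exists.
  rewrite !in_app_iff, !in_map_iff. split.
  - intros [[Q [HQ HE]] | [Q [HQ HE]]].
    + exfalso. apply HX. apply in_map_iff. exists Q. split; auto.
      destruct Q; unfold square_eqb in HE; simpl in *. apply andb_true_iff in HE.
      destruct HE as [H1 H2]. apply Z.eqb_eq in H1. auto.
    + destruct Q as [x y]. apply attacks_iff in HE. destruct HE as [_ HE].
      assert (x <> a) by (let Hxa := fresh in intro Hxa; rewrite Hxa in HQ; apply HX; apply in_map_iff; exists (a,y); auto).
      destruct HE as [HE|[HE|[HE|HE]]].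
      * left. exists (x,y); auto.
      * contradiction.
      * right; left. exists (x,y); simpl; split; auto; lia.
      * right; right. exists (x,y); simpl; split; auto; lia.
  - intros H. right.
    destruct H as [[Q [HE HQ]]|[[Q [HE HQ]]|[Q [HE HQ]]]]; exists Q; split; auto;
    destruct Q as [x y]; simpl in HE; apply attacks_iff;
    (assert (x <> a) by (let Hxa := fresh in intro Hxa; rewrite Hxa in HQ; apply HX; apply in_map_iff; exists (a,y); auto));
    split; try (intros [? ?]; congruence); lia.
Qed.

Lemma row_notX : forall C a l, ~ In a (map fst C) -> rowcount C a l = cnt l (Sa C a).
Proof. intros. unfold rowcount, cnt. f_equal. apply filter_ext. intros b.
  destruct (covered C (a,b)) eqn:E; destruct (memZ b (Sa C a)) eqn:F; auto.
  - apply (covered_notX C a b H) in E. apply memZ_iff in E. congruence.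
  - apply memZ_iff in F. apply (covered_notX C a b H) in F. congruence. Qed.

Lemma row_full : forall C a l, In a (map fst C) -> rowcount C a l = length l.
Proof. intros. unfold rowcount. apply in_map_iff in H. destruct H as [[x y] [Hx HQ]].
  simpl in Hx; subst. induction l as [|b l IH]; simpl; auto.
  assert (covered C (a,b) = true).
  { unfold covered. apply orb_true_iff. destruct (Z.eq_dec y b).
    - left. apply existsb_exists. exists (a,y). split; auto. subst. unfold square_eqb; simpl.
      now rewrite !Z.eqb_refl.
    - right. apply existsb_exists. exists (a,y). split; auto. apply attacks_iff.
      split. intros [_ ?]; congruence. auto. }
  rewrite H; simpl; auto. Qed.

Lemma Sa_len : forall C a, length (Sa C a) = (3 * length C)%nat.
Proof. intros; unfold Sa; rewrite !length_app, !length_map. unfold square. lia. Qed.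

Lemma attack_dup : forall C Q Q', In Q C -> In Q' C -> Q <> Q' -> attacks Q Q' = true ->
  ~ NoDup (map fst C) \/ (forall a, ~ NoDup (Sa C a)).
Proof. intros C [x y] [u v] HQ HQ' Hne HA. apply attacks_iff in HA. destruct HA as [_ HA].
  destruct HA as [HA|[HA|[HA|HA]]].
  - right. intros a Hn. unfold Sa in Hn. apply NoDup_app_remove_r in Hn.
    apply Hne. apply (map_inj_dup _ _ snd C); auto.
  - left. intros Hn. apply Hne. apply (map_inj_dup _ _ fst C); auto.
  - right. intros a Hn. unfold Sa in Hn. apply NoDup_app_remove_l, NoDup_app_remove_r in Hn.
    apply Hne. apply (map_inj_dup _ _ _ C _ _ Hn); auto. simpl; lia.
  - right. intros a Hn. unfold Sa in Hn. apply NoDup_app_remove_l, NoDup_app_remove_l in Hn.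
    apply Hne. apply (map_inj_dup _ _ _ C _ _ Hn); auto. simpl; lia.
Qed.

Lemma Ilen n : length (Ilist n) = n.
Proof. now rewrite Ilist_intv, length_intv. Qed.
Lemma INoDup n : NoDup (Ilist n).
Proof. rewrite Ilist_intv; apply NoDup_intv. Qed.

Lemma sumf_ite1 : forall (P : Z -> bool) c d l,
  sumf (fun a => ((if P a then c else 0) + d)%nat) l = (c * length (filter P l) + d * length l)%nat.
Proof. induction l as [|a l IHl]; simpl. lia. rewrite IHl. destruct (P a); simpl; lia. Qed.

Lemma upper : forall n C Q Q', In Q C -> In Q' C -> Q <> Q' -> attacks Q Q' = true ->
  (cover n C + n <= 4 * length C * n)%nat.
Proof. intros n C Q Q' HQ HQ' Hne HA. unfold cover, board. rewrite cover_rows.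
  change (fun a => length (filter (fun b => covered C (a, b)) (Ilist n))) with (fun a => rowcount C a (Ilist n)).
  set (X := map fst C). set (q := length C).
  assert (HX : length X = q) by (unfold X, q; now rewrite length_map).
  destruct (attack_dup C Q Q' HQ HQ' Hne HA) as [HD|HD].
  - eapply Nat.le_trans with (m := (sumf (fun a => ((if memZ a X then n else 0) + 3 * q)%nat) (Ilist n) + n)%nat).
    + apply Nat.add_le_mono_r, sumf_le. intros a Ha. destruct (memZ a X) eqn:E.
      * apply memZ_iff in E. rewrite row_full by auto. rewrite Ilen. lia.
      * rewrite row_notX. pose proof (cnt_le (Ilist n) (Sa C a) (INoDup n)). rewrite Sa_len in H. fold q in H. lia.
        intro H; apply memZ_iff in H; unfold X in E; congruence.
    + rewrite sumf_ite1, Ilen.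
      pose proof (cnt_le_dup (Ilist n) X (INoDup n) HD). unfold cnt in H. rewrite HX in H. nia.
  - eapply Nat.le_trans with (m := (sumf (fun a => ((if memZ a X then n else 0) + (3 * q - 1))%nat) (Ilist n) + n)%nat).
    + apply Nat.add_le_mono_r, sumf_le. intros a Ha. destruct (memZ a X) eqn:E.
      * apply memZ_iff in E. rewrite row_full by auto. rewrite Ilen. lia.
      * rewrite row_notX. pose proof (cnt_le_dup (Ilist n) (Sa C a) (INoDup n) (HD a)). rewrite Sa_len in H. fold q in H. lia.
        intro H; apply memZ_iff in H; unfold X in E; congruence.
    + rewrite sumf_ite1, Ilen.
      pose proof (cnt_le (Ilist n) X (INoDup n)). unfold cnt in H. rewrite HX in H.
      assert (1 <= q)%nat. { unfold q. destruct C. contradiction. simpl; lia. }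
      nia.
Qed.

Definition wq (i : nat) : square := (Z.of_nat i, 2 * Z.of_nat i).
Definition C0 (q : nat) : list square := map wq (seq 0 q).

Lemma C0_in : forall q Q, In Q (C0 q) <-> exists i, (i < q)%nat /\ Q = wq i.
Proof. intros. unfold C0. rewrite in_map_iff. split.
  - intros [i [H1 H2]]. apply in_seq in H2. exists i. split; auto; lia.
  - intros [i [H1 H2]]. exists i. split; auto. apply in_seq; lia. Qed.

Lemma C0_NoDup : forall q, NoDup (C0 q).
Proof. intros. apply NoDup_map_inj. intros x y _ _ H. unfold wq in H. injection H; lia. apply seq_NoDup. Qed.

Lemma C0_config : forall n q, (1 <= q)%nat -> (4 * q <= n)%nat -> qconfig_on n q (C0 q).
Proof. intros n q Hq Hn. pose proof (hl n ltac:(lia)) as [H1 [H2 [H3 [H4 H5]]]].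
  split; [apply C0_NoDup|split]. unfold C0; now rewrite length_map, length_seq.
  intros P HP. apply C0_in in HP. destruct HP as [i [Hi ->]]. unfold inBoard, inI, wq; cbn [fst snd].
  apply andb_true_iff; split; apply andb_true_iff; split; apply Z.leb_le; lia. Qed.

Definition good (n q : nat) (a : Z) : bool :=
  (lowI n + 4 * Z.of_nat q <=? a) && (a <=? highI n - 4 * Z.of_nat q) &&
  ((4 * Z.of_nat q <=? a) || (a <=? - (4 * Z.of_nat q))).

Lemma good_iff : forall n q a, good n q a = true <->
  lowI n + 4 * Z.of_nat q <= a <= highI n - 4 * Z.of_nat q /\ (4 * Z.of_nat q <= a \/ a <= - (4 * Z.of_nat q)).
Proof. intros. unfold good.
  destruct (Z.leb_spec (lowI n + 4 * Z.of_nat q) a), (Z.leb_spec a (highI n - 4 * Z.of_nat q)),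
    (Z.leb_spec (4 * Z.of_nat q) a), (Z.leb_spec a (- (4 * Z.of_nat q))); cbn [andb orb]; split; intros; try lia; try discriminate; try reflexivity. Qed.

Lemma in_Ilist : forall n a, (1 <= n)%nat -> In a (Ilist n) <-> lowI n <= a <= highI n.
Proof. intros. rewrite Ilist_intv, in_intv. pose proof (hl n H). lia. Qed.

Ltac inC0 H := apply in_map_iff in H; let Q := fresh "Q" in let E := fresh "E" in let HQ := fresh "HQ" in
  destruct H as [Q [E HQ]]; apply C0_in in HQ;
  let i := fresh "i" in let Hi := fresh "Hi" in destruct HQ as [i [Hi ->]]; unfold wq in E; cbn [fst snd] in E.

Lemma Sa_C0_NoDup : forall q a, (4 * Z.of_nat q <= a \/ a <= - (4 * Z.of_nat q)) -> NoDup (Sa (C0 q) a).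
Proof. intros q a Ha. unfold Sa.
  assert (Hinj : forall f : square -> Z, (forall i j, f (wq i) = f (wq j) -> i = j) -> NoDup (map f (C0 q))).
  { intros f Hf. apply NoDup_map_inj; [|apply C0_NoDup]. intros x y Hx Hy Hxy.
    apply C0_in in Hx, Hy. destruct Hx as [i [_ ->]], Hy as [j [_ ->]]. f_equal; auto. }
  apply NoDup_app; [|apply NoDup_app|].
  - apply Hinj. unfold wq; cbn [fst snd]; intros; lia.
  - apply Hinj. unfold wq; cbn [fst snd]; intros; lia.
  - apply Hinj. unfold wq; cbn [fst snd]; intros; lia.
  - intros b H1 H2. inC0 H1. inC0 H2. lia.
  - intros b H1 H2. inC0 H1. apply in_app_iff in H2. destruct H2 as [H2|H2]; inC0 H2; lia.
Qed.

Lemma Sa_C0_incl : forall n q a, (1 <= q)%nat -> (4 * q <= n)%nat -> good n q a = true -> incl (Sa (C0 q) a) (Ilist n).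
Proof. intros n q a Hq Hn Hg b Hb. apply good_iff in Hg. pose proof (hl n ltac:(lia)) as [H1 [H2 [H3 [H4 H5]]]].
  apply in_Ilist; [lia|]. unfold Sa in Hb. rewrite !in_app_iff in Hb.
  destruct Hb as [Hb|[Hb|Hb]]; inC0 Hb; lia. Qed.

Lemma lower : forall n q, (1 <= q)%nat -> (4 * q <= n)%nat ->
  (n * q + 3 * q * length (filter (good n q) (Ilist n)) <= cover n (C0 q))%nat.
Proof. intros n q Hq Hn. pose proof (hl n ltac:(lia)) as [H1 [H2 [H3 [H4 H5]]]].
  unfold cover, board. rewrite cover_rows.
  change (fun a => length (filter (fun b => covered (C0 q) (a, b)) (Ilist n))) with (fun a => rowcount (C0 q) a (Ilist n)).
  set (X := map fst (C0 q)).
  assert (HX : (q <= cnt (Ilist n) X)%nat).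
  { replace q with (length X) at 1 by (unfold X, C0; now rewrite !length_map, length_seq).
    apply cnt_ge. apply NoDup_map_inj; [|apply C0_NoDup].
    intros x y Hx Hy Hxy. apply C0_in in Hx, Hy. destruct Hx as [i [_ ->]], Hy as [j [_ ->]]. unfold wq in *; cbn [fst snd] in *. f_equal; lia.
    intros b Hb. unfold X in Hb. inC0 Hb. apply in_Ilist; lia. }
  eapply Nat.le_trans; [|apply (sumf_le (fun a => ((if memZ a X then n else 0) + (if good n q a then 3 * q else 0))%nat))].
  - rewrite sumf_ite. unfold cnt in HX. nia.
  - intros a Ha. destruct (memZ a X) eqn:E.
    + apply memZ_iff in E. rewrite row_full by auto. rewrite Ilen.
      destruct (good n q a) eqn:G; [|lia]. apply good_iff in G. unfold X in E. inC0 E. lia.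
    + rewrite row_notX. destruct (good n q a) eqn:G; [|lia].
      pose proof (cnt_ge (Ilist n) (Sa (C0 q) a)). rewrite Sa_len in H. unfold C0 in H at 3.
      rewrite length_map, length_seq in H. apply H.
      apply Sa_C0_NoDup. apply good_iff in G; tauto. apply Sa_C0_incl; auto.
      intro H; apply memZ_iff in H; unfold X in E; congruence.
Qed.

Lemma bad_count : forall n q, (1 <= q)%nat -> (4 * q <= n)%nat ->
  (n <= length (filter (good n q) (Ilist n)) + 16 * q)%nat.
Proof. intros n q Hq Hn. pose proof (hl n ltac:(lia)) as [H1 [H2 [H3 [H4 H5]]]].
  pose proof (filter_split_len _ (good n q) (Ilist n)). rewrite Ilen in H.
  assert (length (filter (fun x => negb (good n q x)) (Ilist n)) <=
          length (intv (lowI n) (4*q) ++ intv (highI n - 4 * Z.of_nat q + 1) (4*q) ++ intv (- 4 * Z.of_nat q + 1) (8 * q)))%nat.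
  { apply NoDup_incl_length. apply NoDup_filter, INoDup.
    intros a Ha. apply filter_In in Ha. destruct Ha as [Ha G]. apply in_Ilist in Ha; [|lia].
    destruct (good n q a) eqn:G'; [discriminate|]. rewrite !in_app_iff, !in_intv.
    assert (~ (lowI n + 4 * Z.of_nat q <= a <= highI n - 4 * Z.of_nat q /\ (4 * Z.of_nat q <= a \/ a <= - (4 * Z.of_nat q)))).
    { intro Hc. apply good_iff in Hc. congruence. }
    lia. }
  rewrite !length_app, !length_intv in H0. lia. Qed.
Theorem mainTheorem1 :
  forall q : nat, (0 < q)%nat ->
  exists N1 : nat, forall n : nat, (N1 <= n)%nat ->
    forall C : list square, n_optimal n q C -> non_attacking C.
Proof.
  intros q Hq. exists (48 * q * q + 4 * q + 10)%nat. intros n Hn C [[HND [HL HB]] Hopt].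
  intros Q Q' HQ HQ' Hne. destruct (attacks Q Q') eqn:HA; auto. exfalso.
  pose proof (upper n C Q Q' HQ HQ' Hne HA) as HU. rewrite HL in HU.
  pose proof (Hopt (C0 q) (C0_config n q ltac:(lia) ltac:(lia))) as HO.
  pose proof (lower n q ltac:(lia) ltac:(lia)) as HLo.
  pose proof (bad_count n q ltac:(lia) ltac:(lia)) as HBc.
  set (g := length (filter (good n q) (Ilist n))) in *.
  assert (3 * q * n <= 3 * q * (g + 16 * q))%nat by (apply Nat.mul_le_mono_l; lia).
  nia.
Qed.
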